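(* Let $M$ be a metric space, $X$ a Banach space and $\lambda\geq1$. If $M$ is finitely $\lambda$-Lipschitz representable in $X$, then $\mathcal F(M)$ is $\lambda$-finitely representable in $\mathcal F(X)$.
   Context: For an injective map $\phi$ between metric spaces, $\mathrm{dist}(\phi)=\mathrm{Lip}(\phi)\,\mathrm{Lip}(\phi^{-1})$. $M$ is finitely $\lambda$-Lipschitz representable in $X$ if for every finite $F\subset M$ and every $\varepsilon>0$ there is a map $\phi\colon F\to X$ with $\mathrm{dist}(\phi)\leq\lambda+\varepsilon$. A Banach space $E_0$ is $\lambda$-finitely representable in a Banach space $Y$ if for every finite-dimensional subspace $E$ of $E_0$ and every $\varepsilon>0$ there is a finite-dimensional subspace $F$ of $Y$ with Banach–Mazur distance $d(E,F)\leq\lambda+\varepsilon$. For a pointed metric space $M$ (any base point), $\mathrm{Lip}_0(M)$ is the Banach space of real Lipschitz functions vanishing at the base point normed by the Lipschitz constant, and $\mathcal F(M)=\overline{\mathrm{span}}\{\delta(x):x\in M\}\subset\mathrm{Lip}_0(M)^*$ is the Lipschitz-free space, $\delta(x)$ being evaluation at $x$; a Banach space $X$ is pointed at $0$. *)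

(* Defs.v *)
From HB Require Import structures.
From mathcomp Require Import all_boot all_order all_algebra.
From mathcomp Require Import all_classical all_reals all_analysis.
Import Order.TTheory GRing.Theory Num.Theory.
Local Open Scope classical_set_scope.
Local Open Scope ring_scope.

Set Implicit Arguments.
Unset Strict Implicit.
Unset Printing Implicit Defensive.

Definition is_metric (R : realType) (M : Type) (d : M -> M -> R) : Prop :=
  [/\ (forall x y, 0 <= d x y), (forall x y, d x y = 0 <-> x = y),
      (forall x y, d x y = d y x) & (forall x y z, d x z <= d x y + d y z)].

Definition normdist (R : realType) (X : normedModType R) (x y : X) : R := `|x - y|.
Definition rdist (R : realType) (a b : R) : R := `|a - b|.

Definition lipc (R : realType) (A B : Type) (dA : A -> A -> R) (dB : B -> B -> R)
  (D : set A) (f : A -> B) : \bar R :=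
  ereal_inf [set L%:E | L in [set L : R | 0 <= L /\
     forall x y, D x -> D y -> dB (f x) (f y) <= L * dA x y]].

(* Lipschitz constant of the inverse of an injective f : D -> f(D),
   written out (f^{-1} (f x) = x) *)
Definition lipc_inv (R : realType) (A B : Type) (dA : A -> A -> R) (dB : B -> B -> R)
  (D : set A) (f : A -> B) : \bar R :=
  ereal_inf [set L%:E | L in [set L : R | 0 <= L /\
     forall x y, D x -> D y -> dA x y <= L * dB (f x) (f y)]].

Definition distortion (R : realType) (A B : Type) (dA : A -> A -> R) (dB : B -> B -> R)
  (D : set A) (f : A -> B) : \bar R :=
  (lipc dA dB D f * lipc_inv dA dB D f)%E.

Definition fin_lip_representable (R : realType) (M Y : Type) (dM : M -> M -> R)
  (dY : Y -> Y -> R) (lam : R) : Prop :=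
  forall F : set M, finite_set F -> forall eps : R, 0 < eps ->
    exists phi : M -> Y,
      (forall x y, F x -> F y -> phi x = phi y -> x = y) /\
      (distortion dM dY F phi <= (lam + eps)%:E)%E.

Definition lip0 (R : realType) (M : Type) (dM : M -> M -> R) (p : M) (f : M -> R) : Prop :=
  f p = 0 /\ (lipc dM (@rdist R) setT f < +oo)%E.

Definition Lip0 (R : realType) (M : Type) (dM : M -> M -> R) (p : M) : Type :=
  {f : M -> R | lip0 dM p f}.

Definition lipnorm (R : realType) (M : Type) (dM : M -> M -> R) (p : M)
  (f : Lip0 dM p) : \bar R := lipc dM (@rdist R) setT (proj1_sig f).

Definition dnorm (R : realType) (M : Type) (dM : M -> M -> R) (p : M)
  (phi : Lip0 dM p -> R) : \bar R :=
  ereal_sup [set (`|phi f|)%:E | f in [set f | (lipnorm f <= 1)%E]].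

Definition in_dual (R : realType) (M : Type) (dM : M -> M -> R) (p : M)
  (phi : Lip0 dM p -> R) : Prop :=
  [/\ (forall f g h : Lip0 dM p,
         proj1_sig h = (fun x => proj1_sig f x + proj1_sig g x) -> phi h = phi f + phi g),
      (forall (a : R) (f g : Lip0 dM p),
         proj1_sig g = (fun x => a * proj1_sig f x) -> phi g = a * phi f)
    & (dnorm phi < +oo)%E].

Definition delta (R : realType) (M : Type) (dM : M -> M -> R) (p : M) (x : M) :
  Lip0 dM p -> R := fun f => proj1_sig f x.

Definition span (R : realType) (V : lmodType R) (S : set V) : set V :=
  [set v | exists (n : nat) (a : 'I_n -> R) (s : 'I_n -> V),
             (forall i, S (s i)) /\ v = \sum_(i < n) a i *: s i].

(* Lipschitz-free space F(M): closed linear span of {delta x} in Lip_0(M)^* *)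
Definition FreeSpace (R : realType) (M : Type) (dM : M -> M -> R) (p : M) :
  set (Lip0 dM p -> R) :=
  [set phi : Lip0 dM p -> R | in_dual phi /\
     forall eps : R, 0 < eps -> exists psi : Lip0 dM p -> R, span (range (@delta R M dM p)) psi /\
        (dnorm (phi - psi)%R < eps%:E)%E].

Definition fd_subspace (R : realType) (V : lmodType R) (W E : set V) : Prop :=
  exists s : seq V, (forall v, v \in s -> W v) /\ E = span [set v | v \in s].

Definition opnorm (R : realType) (V1 V2 : lmodType R) (N1 : V1 -> \bar R)
  (N2 : V2 -> \bar R) (E : set V1) (T : V1 -> V2) : \bar R :=
  ereal_sup [set N2 (T u) | u in [set u | E u /\ (N1 u <= 1)%E]].

Definition lin_iso (R : realType) (V1 V2 : lmodType R) (E : set V1) (F : set V2)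
  (T : V1 -> V2) (S : V2 -> V1) : Prop :=
  [/\ (forall u, E u -> F (T u)), (forall w, F w -> E (S w)),
      (forall u, E u -> S (T u) = u), (forall w, F w -> T (S w) = w)
    & (forall (a : R) u v, E u -> E v -> T (a *: u + v) = a *: T u + T v)].

Definition bm_dist (R : realType) (V1 V2 : lmodType R) (N1 : V1 -> \bar R)
  (N2 : V2 -> \bar R) (E : set V1) (F : set V2) : \bar R :=
  ereal_inf [set (opnorm N1 N2 E TS.1 * opnorm N2 N1 F TS.2)%E
            | TS in [set TS : (V1 -> V2) * (V2 -> V1) | lin_iso E F TS.1 TS.2]].

Definition fin_representable (R : realType) (V1 V2 : lmodType R)
  (N1 : V1 -> \bar R) (W1 : set V1) (N2 : V2 -> \bar R) (W2 : set V2) (lam : R) : Prop :=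
  forall E, fd_subspace W1 E -> forall eps : R, 0 < eps ->
    exists F, fd_subspace W2 F /\ (bm_dist N1 N2 E F <= (lam + eps)%:E)%E.

(* Main.v *)
Require Import Defs.
From HB Require Import structures.
From mathcomp Require Import all_boot all_order all_algebra.
From mathcomp Require Import all_classical all_reals all_analysis.
From mathcomp.algebra_tactics Require Import ring lra.
Import Order.TTheory GRing.Theory Num.Theory.
Local Open Scope classical_set_scope.
Local Open Scope ring_scope.
Set Implicit Arguments.
Unset Strict Implicit.
Unset Printing Implicit Defensive.

Lemma lipc_le (R : realType) (A B : Type) (dA : A -> A -> R) (dB : B -> B -> R)
  (D : set A) (f : A -> B) (c : R) :
  (forall x y, 0 <= dA x y) -> 0 <= c ->
  (lipc dA dB D f <= c%:E)%E <->
  (forall x y, D x -> D y -> dB (f x) (f y) <= c * dA x y).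
Proof.
move=> dA0 c0; split.
- move=> H x y Dx Dy; apply/ler_addgt0Pr => e e0.
  have a1 : 0 < dA x y + 1 by rewrite ltr_wpDl.
  have : (lipc dA dB D f < (c + e / (dA x y + 1))%:E)%E.
    by apply: le_lt_trans H _; rewrite lte_fin ltrDl divr_gt0.
  move/ereal_inf_lt => [_ [L [L0 HL] <-]]; rewrite lte_fin => Llt.
  apply: le_trans (HL x y Dx Dy) _.
  apply: le_trans (_ : (c + e / (dA x y + 1)) * dA x y <= _).
    by apply: ler_wpM2r => //; apply: ltW.
  rewrite mulrDl lerD2l mulrAC ler_pdivrMr // ler_wpM2l ?ltW //.
  by rewrite ltrDl.
- move=> H; apply: ereal_inf_lbound; exists c => //.
Qed.

Lemma lipc_fin (R : realType) (A B : Type) (dA : A -> A -> R) (dB : B -> B -> R)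
  (D : set A) (f : A -> B) :
  (lipc dA dB D f < +oo)%E ->
  exists L, 0 <= L /\ forall x y, D x -> D y -> dB (f x) (f y) <= L * dA x y.
Proof. by move/ereal_inf_lt => [_ [L [L0 HL] _] _]; exists L. Qed.

Lemma lipc_inv_lipc (R : realType) (A B : Type) (dA : A -> A -> R) (dB : B -> B -> R)
  (D : set A) (f : A -> B) :
  lipc_inv dA dB D f = lipc (fun x y => dB (f x) (f y)) dA D id.
Proof. by []. Qed.

Definition lip1 (R : realType) (T : Type) (d : T -> T -> R) (f : T -> R) :=
  forall x y, `|f x - f y| <= d x y.

Definition bnd (R : realType) (T : Type) (d : T -> T -> R) (p : T)
  (mu : Lip0 d p -> R) (c : R) :=
  forall f : Lip0 d p, lip1 d (proj1_sig f) -> `|mu f| <= c.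

Definition homog (R : realType) (T : Type) (d : T -> T -> R) (p : T)
  (mu : Lip0 d p -> R) :=
  forall (a : R) (f g : Lip0 d p),
    proj1_sig g = (fun x => a * proj1_sig f x) -> mu g = a * mu f.

Definition addit (R : realType) (T : Type) (d : T -> T -> R) (p : T)
  (mu : Lip0 d p -> R) :=
  forall (f g h : Lip0 d p),
    proj1_sig h = (fun x => proj1_sig f x + proj1_sig g x) -> mu h = mu f + mu g.

Lemma lipnorm1 (R : realType) (T : Type) (d : T -> T -> R) (p : T) (f : Lip0 d p) :
  (forall x y, 0 <= d x y) ->
  (lipnorm f <= 1%:E)%E <-> lip1 d (proj1_sig f).
Proof.
move=> d0; rewrite /lipnorm lipc_le //; split.
  by move=> H x y; have := H x y I I; rewrite mul1r.
by move=> H x y _ _; rewrite mul1r; apply: H.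
Qed.

Lemma mkLip0_proof (R : realType) (T : Type) (d : T -> T -> R) (p : T) (h : T -> R)
  (L : R) : (forall x y, 0 <= d x y) -> h p = 0 -> 0 <= L ->
  (forall x y, `|h x - h y| <= L * d x y) -> lip0 d p h.
Proof.
move=> d0 hp L0 hL; split => //.
apply: (@le_lt_trans _ _ L%:E); last by rewrite ltry.
by rewrite lipc_le // => x y _ _; apply: hL.
Qed.

Definition mkLip0 (R : realType) (T : Type) (d : T -> T -> R) (p : T) (h : T -> R)
  (L : R) (d0 : forall x y, 0 <= d x y) (hp : h p = 0) (L0 : 0 <= L)
  (hL : forall x y, `|h x - h y| <= L * d x y) : Lip0 d p :=
  exist _ h (mkLip0_proof d0 hp L0 hL).

Lemma Lip0_lip (R : realType) (T : Type) (d : T -> T -> R) (p : T) (f : Lip0 d p) :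
  exists L, 0 <= L /\ forall x y, `|proj1_sig f x - proj1_sig f y| <= L * d x y.
Proof.
have [_ Hf] := proj2_sig f; have [L [L0 HL]] := lipc_fin Hf; exists L; split => // x y.
exact: HL.
Qed.

Lemma dnorm_le (R : realType) (T : Type) (d : T -> T -> R) (p : T)
  (mu : Lip0 d p -> R) (c : R) : (forall x y, 0 <= d x y) ->
  bnd mu c -> (dnorm mu <= c%:E)%E.
Proof.
move=> d0 H; apply: ub_ereal_sup => _ [f Hf <-]; rewrite lee_fin.
by apply: H; rewrite -lipnorm1.
Qed.

Lemma dnorm_ub (R : realType) (T : Type) (d : T -> T -> R) (p : T)
  (mu : Lip0 d p -> R) (c : R) : (forall x y, 0 <= d x y) ->
  (dnorm mu <= c%:E)%E -> bnd mu c.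
Proof.
move=> d0 H f Hf; rewrite -lee_fin; apply: le_trans H.
by apply: ereal_sup_ubound; exists f => //; rewrite /= lipnorm1.
Qed.

Lemma zero0_proof (R : realType) (T : Type) (d : T -> T -> R) (p : T) :
  (forall x y, 0 <= d x y) -> lip0 d p (fun _ => 0).
Proof.
move=> d0; apply: (@mkLip0_proof _ _ _ _ _ 0) => // x y.
by rewrite subrr normr0 mul0r.
Qed.

Lemma lcomb_proof (R : realType) (T : Type) (d : T -> T -> R) (p : T)
  (a : R) (f g : Lip0 d p) :
  (forall x y, 0 <= d x y) ->
  lip0 d p (fun x => a * proj1_sig f x + proj1_sig g x).
Proof.
move=> d0.
have [Lf [Lf0 Hf]] := Lip0_lip f; have [Lg [Lg0 Hg]] := Lip0_lip g.
apply: (@mkLip0_proof _ _ _ _ _ (`|a| * Lf + Lg)) => //.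
- by have [fp _] := proj2_sig f; have [gp _] := proj2_sig g; rewrite fp gp mulr0 addr0.
- by rewrite addr_ge0 // mulr_ge0.
move=> x y.
have -> : a * proj1_sig f x + proj1_sig g x - (a * proj1_sig f y + proj1_sig g y)
   = a * (proj1_sig f x - proj1_sig f y) + (proj1_sig g x - proj1_sig g y).
  by rewrite mulrBr; lra.
apply: le_trans (ler_normD _ _) _.
rewrite normrM mulrDl -mulrA lerD // ler_wpM2l //.
Qed.

Definition is_met0 (R : realType) (T : Type) (d : T -> T -> R) :=
  forall x y, 0 <= d x y.

Definition zero0 (R : realType) (T : Type) (d : T -> T -> R) (p : T)
  (d0 : is_met0 d) : Lip0 d p := exist _ (fun _ => 0) (zero0_proof p d0).

Definition lcomb0 (R : realType) (T : Type) (d : T -> T -> R) (p : T)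
  (d0 : is_met0 d) (a : R) (f g : Lip0 d p) : Lip0 d p :=
  exist _ (fun x => a * proj1_sig f x + proj1_sig g x) (lcomb_proof a f g d0).

Lemma bnd_ge0 (R : realType) (T : Type) (d : T -> T -> R) (p : T)
  (d0 : is_met0 d) (mu : Lip0 d p -> R) c : bnd mu c -> 0 <= c.
Proof.
move=> H; apply: le_trans (H (zero0 p d0) _) => // x y /=.
by rewrite subrr normr0.
Qed.

Lemma dnorm_ge0 (R : realType) (T : Type) (d : T -> T -> R) (p : T)
  (d0 : is_met0 d) (mu : Lip0 d p -> R) : (0 <= dnorm mu)%E.
Proof.
apply: (@le_trans _ _ (`|mu (zero0 p d0)|)%:E); first by rewrite lee_fin.
apply: ereal_sup_ubound; exists (zero0 p d0) => //=.
rewrite /= lipnorm1 // => x y /=; by rewrite subrr normr0.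
Qed.

Definition nrm (R : realType) (T : Type) (d : T -> T -> R) (p : T)
  (mu : Lip0 d p -> R) : R := fine (dnorm mu).

Lemma nrm_bnd (R : realType) (T : Type) (d : T -> T -> R) (p : T)
  (d0 : is_met0 d) (mu : Lip0 d p -> R) c : bnd mu c ->
  [/\ bnd mu (nrm mu), nrm mu <= c, 0 <= nrm mu & dnorm mu = (nrm mu)%:E].
Proof.
move=> H.
have Hle := dnorm_le d0 H.
have Hge := dnorm_ge0 d0 mu.
have fin : dnorm mu \is a fin_num.
  by rewrite ge0_fin_numE //; apply: le_lt_trans Hle _; rewrite ltry.
have E : dnorm mu = (nrm mu)%:E by rewrite /nrm fineK.
split => //.
- by apply: dnorm_ub => //; rewrite -E.
- by rewrite -lee_fin -E.
- by rewrite -lee_fin -E.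
Qed.

Lemma bnd_scale (R : realType) (T : Type) (d : T -> T -> R) (p : T)
  (d0 : is_met0 d) (mu : Lip0 d p -> R) c (f : Lip0 d p) (K : R) :
  homog mu -> bnd mu c -> 0 <= K ->
  (forall x y, `|proj1_sig f x - proj1_sig f y| <= K * d x y) ->
  `|mu f| <= K * c.
Proof.
move=> hom H K0 HK.
have c0 := bnd_ge0 d0 H.
apply/ler_addgt0Pr => e e0.
set K' := K + e / (c + 1).
have c1 : 0 < c + 1 by rewrite ltr_wpDl.
have K'0 : 0 < K' by rewrite ltr_wpDl // divr_gt0.
set g := lcomb0 d0 (K'^-1) f (zero0 p d0).
have E : mu f = K' * mu g.
  apply: hom => /=; apply: funext => x; rewrite addr0 mulrA mulfV ?mul1r //.
  by rewrite gt_eqF.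
have Hg : `|mu g| <= c.
  apply: H => x y /=; rewrite !addr0 -mulrBr normrM gtr0_norm ?invr_gt0 //.
  rewrite ler_pdivrMl // (le_trans (HK x y)) // ler_wpM2r //.
  by rewrite lerDl divr_ge0 // ltW.
rewrite E normrM gtr0_norm //.
apply: le_trans (ler_wpM2l (ltW K'0) Hg) _.
rewrite /K' mulrDl lerD2l mulrAC ler_pdivrMr // ler_wpM2l ?ltW //.
by rewrite ltrDl.
Qed.

Definition mc (R : realType) (I Y : Type) (d : Y -> Y -> R) (pos : I -> Y)
  (val : I -> R) (K : R) (y0 : I) (ys : seq I) (z : Y) : R :=
  foldr (fun y acc => Order.min (val y + K * d z (pos y)) acc)
        (val y0 + K * d z (pos y0)) ys.

Lemma mc_le (R : realType) (I Y : Type) (d : Y -> Y -> R) (pos : I -> Y)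
  (val : I -> R) (K : R) (y0 : I) (ys : seq I) (z : Y) y :
  y = y0 \/ List.In y ys -> mc d pos val K y0 ys z <= val y + K * d z (pos y).
Proof.
elim: ys => [|a ys IH] /=.
  by case=> // ->.
case=> [E|[E|Hin]]; rewrite ge_min.
- by rewrite IH ?orbT //; left.
- by rewrite E lexx.
- by rewrite IH ?orbT //; right.
Qed.

Lemma mc_att (R : realType) (I Y : Type) (d : Y -> Y -> R) (pos : I -> Y)
  (val : I -> R) (K : R) (y0 : I) (ys : seq I) (z : Y) :
  exists y, (y = y0 \/ List.In y ys) /\ mc d pos val K y0 ys z = val y + K * d z (pos y).
Proof.
elim: ys => [|a ys [y [Hy E]]] /=.
  by exists y0; split => //; left.
rewrite minEle; case: ifP => _.
  by exists a; split => //; right; left.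
exists y; split => //; case: Hy => [->|H]; [left|right; right] => //.
Qed.

Lemma mc_lip (R : realType) (I Y : Type) (d : Y -> Y -> R) (pos : I -> Y)
  (val : I -> R) (K : R) (y0 : I) (ys : seq I) :
  0 <= K -> (forall a b, d a b = d b a) -> (forall a b c, d a c <= d a b + d b c) ->
  forall z z', `|mc d pos val K y0 ys z - mc d pos val K y0 ys z'| <= K * d z z'.
Proof.
move=> K0 sym tri.
have H : forall z z', mc d pos val K y0 ys z <= mc d pos val K y0 ys z' + K * d z z'.
  move=> z z'; have [y [Hy E]] := mc_att d pos val K y0 ys z'.
  apply: le_trans (mc_le d pos val K z Hy) _; rewrite E -addrA lerD2l.
  rewrite -mulrDr ler_wpM2l // addrC; exact: tri.
move=> z z'; rewrite ler_norml; have := H z z'; have := H z' z; rewrite (sym z' z).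
move=> h1 h2; apply/andP; split; lra.
Qed.

Lemma mc_ext (R : realType) (I Y : Type) (d : Y -> Y -> R) (pos : I -> Y)
  (val : I -> R) (K : R) (y0 : I) (ys : seq I) :
  (forall a, d a a = 0) ->
  (forall y y', (y = y0 \/ List.In y ys) -> (y' = y0 \/ List.In y' ys) ->
     val y - val y' <= K * d (pos y) (pos y')) ->
  forall y, (y = y0 \/ List.In y ys) -> mc d pos val K y0 ys (pos y) = val y.
Proof.
move=> d0 Hv y Hy; apply/eqP; rewrite eq_le; apply/andP; split.
  by apply: le_trans (mc_le d pos val K (pos y) Hy) _; rewrite d0 mulr0 addr0.
have [y1 [Hy1 E]] := mc_att d pos val K y0 ys (pos y).
by rewrite E -lerBlDl; apply: Hv.
Qed.

Definition approxP (R : realType) (T : Type) (d : T -> T -> R) (p : T)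
  (mu : Lip0 d p -> R) :=
  forall e : R, 0 < e -> exists s : seq (R * T), forall f : Lip0 d p,
    lip1 d (proj1_sig f) -> `|mu f - \sum_(q <- s) q.1 * proj1_sig f q.2| <= e.

Definition Good (R : realType) (T : Type) (d : T -> T -> R) (p : T)
  (mu : Lip0 d p -> R) :=
  [/\ homog mu, addit mu, (exists c, bnd mu c) & approxP mu].

Lemma Good_ext (R : realType) (T : Type) (d : T -> T -> R) (p : T)
  (u w : Lip0 d p -> R) : Good u -> (forall f, u f = w f) -> Good w.
Proof. by move=> G E; have <- : u = w by apply: funext. Qed.

Lemma Good0 (R : realType) (T : Type) (d : T -> T -> R) (p : T) :
  Good (fun _ : Lip0 d p => 0).
Proof.
split.
- by move=> a f g _; rewrite mulr0.
- by move=> f g h _; rewrite addr0.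
- by exists 0 => f _; rewrite normr0.
- by move=> e e0; exists [::] => f _; rewrite big_nil subrr normr0 ltW.
Qed.

Lemma Good_comb (R : realType) (T : Type) (d : T -> T -> R) (p : T)
  (a : R) (u w : Lip0 d p -> R) :
  Good u -> Good w -> Good (fun f => a * u f + w f).
Proof.
move=> [hu au [cu bu] pu] [hw aw [cw bw] pw]; split.
- move=> b f g E; rewrite (hu _ _ _ E) (hw _ _ _ E); ring.
- move=> f g h E; rewrite (au _ _ _ E) (aw _ _ _ E); ring.
- exists (`|a| * cu + cw) => f Hf.
  apply: le_trans (ler_normD _ _) _; rewrite normrM.
  by apply: lerD; [apply: ler_wpM2l => //; exact: bu | exact: bw].
- move=> e e0.
  have a1 : 0 < 2 * (`|a| + 1) by rewrite mulr_gt0 // ltr_wpDl.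
  have [su Hu] := pu (e / (2 * (`|a| + 1))) (divr_gt0 e0 a1).
  have [sw Hw] := pw (e / 2) (divr_gt0 e0 (ltr0Sn _ 1)).
  exists ([seq (a * q.1, q.2) | q <- su] ++ sw) => f Hf.
  rewrite big_cat big_map /=.
  have -> : \sum_(i <- su) a * i.1 * proj1_sig f i.2 =
            a * \sum_(i <- su) i.1 * proj1_sig f i.2.
    by rewrite mulr_sumr; apply: eq_bigr => i _; rewrite mulrA.
  set Su := \sum_(_ <- su) _; set Sw := \sum_(_ <- sw) _.
  have -> : a * u f + w f - (a * Su + Sw) = a * (u f - Su) + (w f - Sw) by ring.
  apply: le_trans (ler_normD _ _) _; rewrite normrM.
  have h1 : `|a| * `|u f - Su| <= `|a| * (e / (2 * (`|a| + 1))).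
    by apply: ler_wpM2l => //; apply: Hu.
  have h2 : `|a| * (e / (2 * (`|a| + 1))) <= e / 2.
    rewrite mulrA ler_pdivrMr //.
    have E2 : e / 2 * (2 * (`|a| + 1)) = `|a| * e + e by field.
    by rewrite E2 lerDl ltW.
  have h3 := Hw f Hf.
  lra.
Qed.

Lemma Good_free (R : realType) (T : Type) (d : T -> T -> R) (p : T)
  (d0 : is_met0 d) (mu : Lip0 d p -> R) : FreeSpace mu -> Good mu.
Proof.
move=> [[ad hom fin] app]; split => //.
- exists (fine (dnorm mu)); apply: dnorm_ub => //.
  by rewrite fineK // ge0_fin_numE // dnorm_ge0.
- move=> e e0; have [psi [[n [a [s [Hs Epsi]]]] Hd]] := app e e0.
  have [x Hx] : {x : 'I_n -> T & forall i, @delta R T d p (x i) = s i}.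
    apply: (@choice _ _ (fun i y => @delta R T d p y = s i)) => i.
    by case: (Hs i) => y _ <-; exists y.
  exists [seq (a i, x i) | i <- index_enum 'I_n] => f Hf.
  have Hb : bnd (mu - psi) e by apply: dnorm_ub => //; apply: ltW.
  have E : (mu - psi) f = mu f - \sum_(j < n) a j * sval f (x j).
    rewrite Epsi fct_sumE; congr (_ - _).
    by apply: eq_bigr => i _; rewrite -Hx.
  by have := Hb f Hf; rewrite E big_map.
Qed.

Lemma sum_delta (R : realType) (F : nat -> R) n i : (i < n)%N ->
  \sum_(j < n) F j * (nat_of_ord j == i)%:R = F i.
Proof.
move=> Hi; rewrite (bigD1 (Ordinal Hi)) //= eqxx mulr1 big1 ?addr0 //.
move=> j Hj; suff -> : (nat_of_ord j == i) = false by rewrite mulr0.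
by apply/negbTE; apply: contra Hj => /eqP E; apply/eqP; apply: val_inj.
Qed.

Definition InE (R : realType) (T : Type) (d : T -> T -> R) (p : T)
  (s : seq (Lip0 d p -> R)) (mu : Lip0 d p -> R) :=
  exists c : nat -> R, forall f, mu f = \sum_(i < size s) c i * nth 0 s i f.

Lemma InE_ext (R : realType) (T : Type) (d : T -> T -> R) (p : T)
  (s : seq (Lip0 d p -> R)) (u w : Lip0 d p -> R) :
  InE s u -> (forall f, u f = w f) -> InE s w.
Proof. by move=> [c Hc] E; exists c => f; rewrite -E. Qed.

Lemma InE0 (R : realType) (T : Type) (d : T -> T -> R) (p : T)
  (s : seq (Lip0 d p -> R)) : InE s (fun _ => 0).
Proof. by exists (fun _ => 0) => f; rewrite big1 // => i _; rewrite mul0r. Qed.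

Lemma InE_comb (R : realType) (T : Type) (d : T -> T -> R) (p : T)
  (s : seq (Lip0 d p -> R)) (a : R) (u w : Lip0 d p -> R) :
  InE s u -> InE s w -> InE s (fun f => a * u f + w f).
Proof.
move=> [cu Hu] [cw Hw]; exists (fun i => a * cu i + cw i) => f.
rewrite Hu Hw mulr_sumr -big_split; apply: eq_bigr => i _ /=; ring.
Qed.

Lemma InE_s (R : realType) (T : Type) (d : T -> T -> R) (p : T)
  (s : seq (Lip0 d p -> R)) i : (i < size s)%N -> InE s (nth 0 s i).
Proof.
move=> Hi; exists (fun j => (j == i)%:R) => f.
rewrite -(sum_delta (fun j => nth 0 s j f) Hi); apply: eq_bigr => j _; apply: mulrC.
Qed.

Lemma InE_sum (R : realType) (T : Type) (d : T -> T -> R) (p : T)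
  (s : seq (Lip0 d p -> R)) (v : nat -> Lip0 d p -> R) (a : nat -> R) n :
  (forall j, InE s (v j)) -> InE s (fun f => \sum_(j < n) a j * v j f).
Proof.
move=> Hv; elim: n => [|n IH].
  by apply: InE_ext (InE0 s) _ => f; rewrite big_ord0.
apply: InE_ext (InE_comb (a n) (Hv n) IH) _ => f.
by rewrite big_ord_recr /= addrC.
Qed.

Lemma Good_sum (R : realType) (T : Type) (d : T -> T -> R) (p : T)
  (v : nat -> Lip0 d p -> R) (a : nat -> R) n :
  (forall j, Good (v j)) -> Good (fun f => \sum_(j < n) a j * v j f).
Proof.
move=> Hv; elim: n => [|n IH].
  by apply: Good_ext (Good0 d p) _ => f; rewrite big_ord0.
apply: Good_ext (Good_comb (a n) (Hv n) IH) _ => f.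
by rewrite big_ord_recr /= addrC.
Qed.

Lemma InE_Good (R : realType) (T : Type) (d : T -> T -> R) (p : T)
  (s : seq (Lip0 d p -> R)) (mu : Lip0 d p -> R) :
  (forall i, Good (nth 0 s i)) -> InE s mu -> Good mu.
Proof.
move=> Hs [c Hc]; apply: Good_ext (Good_sum c (size s) Hs) _ => f.
by rewrite Hc.
Qed.

Fixpoint lsum (R : realType) (T : Type) (d : T -> T -> R) (p : T)
  (d0 : is_met0 d) (n : nat) (c : nat -> R) (fb : nat -> Lip0 d p) : Lip0 d p :=
  match n with
  | 0 => zero0 p d0
  | n'.+1 => lcomb0 d0 (c n') (fb n') (lsum d0 n' c fb)
  end.

Lemma mu_zero0 (R : realType) (T : Type) (d : T -> T -> R) (p : T)
  (d0 : is_met0 d) (mu : Lip0 d p -> R) : homog mu -> mu (zero0 p d0) = 0.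
Proof.
move=> hom; rewrite (hom 0 (zero0 p d0) (zero0 p d0)) ?mul0r //.
by apply: funext => x /=; rewrite mul0r.
Qed.

Lemma mu_lcomb0 (R : realType) (T : Type) (d : T -> T -> R) (p : T)
  (d0 : is_met0 d) (mu : Lip0 d p -> R) a f g : homog mu -> addit mu ->
  mu (lcomb0 d0 a f g) = a * mu f + mu g.
Proof.
move=> hom ad.
rewrite (ad (lcomb0 d0 a f (zero0 p d0)) g) //.
  rewrite (hom a f) //; apply: funext => x /=; by rewrite addr0.
by apply: funext => x /=; rewrite addr0.
Qed.

Lemma mu_lsum (R : realType) (T : Type) (d : T -> T -> R) (p : T)
  (d0 : is_met0 d) (mu : Lip0 d p -> R) n c fb : homog mu -> addit mu ->
  mu (lsum d0 n c fb) = \sum_(j < n) c j * mu (fb j).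
Proof.
move=> hom ad; elim: n => [|n IH] /=.
  by rewrite big_ord0 mu_zero0.
by rewrite mu_lcomb0 // IH big_ord_recr /= addrC.
Qed.

Lemma biorth (R : realType) (T : Type) (d : T -> T -> R) (p : T)
  (d0 : is_met0 d) (s : seq (Lip0 d p -> R)) :
  (forall i, Good (nth 0 s i)) ->
  exists k (v : nat -> Lip0 d p -> R) (fb : nat -> Lip0 d p),
    [/\ forall j, InE s (v j),
        forall i j, (i < k)%N -> (j < k)%N -> v i (fb j) = (i == j)%:R
      & forall i, (i < size s)%N -> forall f,
          nth 0 s i f = \sum_(j < k) nth 0 s i (fb j) * v j f].
Proof.
move=> Hs.
suff : forall m, (m <= size s)%N ->
  exists k (v : nat -> Lip0 d p -> R) (fb : nat -> Lip0 d p),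
    [/\ forall j, InE s (v j),
        forall i j, (i < k)%N -> (j < k)%N -> v i (fb j) = (i == j)%:R
      & forall i, (i < m)%N -> forall f,
          nth 0 s i f = \sum_(j < k) nth 0 s i (fb j) * v j f].
  by move/(_ (size s) (leqnn _)).
elim => [_|m IH Hm].
  exists 0, (fun _ _ => 0), (fun _ => zero0 p d0); split => //.
  by move=> j; apply: InE0.
have [k [v [fb [Hv Hb Hr]]]] := IH (ltnW Hm).
set u := nth 0 s m.
set w := fun f => u f - \sum_(j < k) u (fb j) * v j f.
have Gv : forall j, Good (v j) by move=> j; apply: InE_Good (Hv j).
have InEw : InE s w.
  apply: InE_ext (InE_comb 1 (InE_s Hm) (InE_sum (fun j => - u (fb j)) k Hv)) _.
  move=> f; rewrite /w mul1r; congr (_ + _); rewrite -sumrN.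
  by apply: eq_bigr => j _; rewrite mulNr.
have Gw : Good w by apply: InE_Good InEw.
have wfb : forall j, (j < k)%N -> w (fb j) = 0.
  move=> j Hj; rewrite /w.
  rewrite (eq_bigr (fun l : 'I_k => u (fb l) * (nat_of_ord l == j)%:R)).
    by rewrite (sum_delta (fun l => u (fb l))) // subrr.
  by move=> l _; rewrite Hb.
have Hrm : forall i, (i < m)%N -> forall f, nth 0 s i f = \sum_(j < k) nth 0 s i (fb j) * v j f.
  exact: Hr.
case: (pselect (exists g0, w g0 != 0)) => [[g0 Hg0]|Hn]; last first.
  exists k, v, fb; split => // i; rewrite ltnS leq_eqVlt => /orP [/eqP ->|Hi]; last first.
    by apply: Hr.
  move=> f.
  have : w f = 0 by apply/eqP; apply/negP => H; apply: Hn; exists f; apply/negP.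
  rewrite /w -/u; lra.
set c := (w g0)^-1.
set fnew := lcomb0 d0 c g0 (lsum d0 k (fun j => - (c * v j g0)) fb).
have [hw aw _ _] := Gw.
have Efnew : forall mu, homog mu -> addit mu ->
    mu fnew = c * mu g0 + \sum_(j < k) (- (c * v j g0)) * mu (fb j).
  by move=> mu hm am; rewrite /fnew mu_lcomb0 // mu_lsum.
have F1 : forall i, (i < k)%N -> v i fnew = 0.
  move=> i Hi; have [hv av _ _] := Gv i; rewrite Efnew //.
  rewrite (eq_bigr (fun l : 'I_k => (- (c * v l g0)) * (nat_of_ord l == i)%:R)).
    by rewrite (sum_delta (fun l => - (c * v l g0))) // mulrC addrN.
  by move=> l _; rewrite Hb // eq_sym.
have F2 : w fnew = 1.
  rewrite Efnew // big1 ?addr0 ?mulVf //.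
  by move=> l _; rewrite wfb // mulr0.
exists k.+1, (fun j => if j == k then w else v j), (fun j => if j == k then fnew else fb j).
split.
- by move=> j; case: ifP.
- move=> i j Hi Hj.
  have [Ei|nik] := eqVneq i k; have [Ej|njk] := eqVneq j k.
  + by rewrite F2 Ei Ej eqxx.
  + have Hj' : (j < k)%N by rewrite ltn_neqAle njk -ltnS.
    by rewrite wfb // Ei eq_sym (negbTE njk).
  + have Hi' : (i < k)%N by rewrite ltn_neqAle nik -ltnS.
    by rewrite F1 // Ej (negbTE nik).
  + have Hi' : (i < k)%N by rewrite ltn_neqAle nik -ltnS.
    have Hj' : (j < k)%N by rewrite ltn_neqAle njk -ltnS.
    by rewrite Hb.
- move=> i Hi f; rewrite big_ord_recr /= eqxx.
  rewrite (eq_bigr (fun j : 'I_k => nth 0 s i (fb j) * v j f)); last first.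
    by move=> j _; rewrite (ltn_eqF (ltn_ord j)).
  move: Hi; rewrite ltnS leq_eqVlt => /orP [/eqP ->|Hi].
  + have Hu : forall g, u g = w g + \sum_(j < k) u (fb j) * v j g.
      by move=> g; rewrite /w subrK.
    have Ufn : u fnew = 1.
      by rewrite (Hu fnew) F2 big1 ?addr0 // => j _; rewrite F1 // mulr0.
    by rewrite -/u Ufn mul1r addrC; apply: Hu.
  + have -> : nth 0 s i fnew = 0.
      by rewrite Hrm // big1 // => j _; rewrite F1 // mulr0.
    by rewrite mul0r addr0 Hrm.
Qed.

Lemma span_InE (R : realType) (T : Type) (d : T -> T -> R) (p : T)
  (s : seq (Lip0 d p -> R)) (mu : Lip0 d p -> R) :
  Defs.span [set v | v \in s] mu <-> InE s mu.
Proof.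
split.
- move=> [n [a [t [Ht E]]]].
  exists (fun j => \sum_(i < n) a i * (index (t i) s == j)%:R) => f.
  rewrite E fct_sumE.
  under [RHS]eq_bigr => j _ do rewrite mulr_suml.
  rewrite exchange_big /=; apply: eq_bigr => i _.
  have Hi : (index (t i) s < size s)%N by rewrite index_mem; apply: Ht.
  rewrite (eq_bigr (fun j : 'I_(size s) => a i * (nth 0 s j f * (nat_of_ord j == index (t i) s)%:R))).
    by rewrite -mulr_sumr (sum_delta (fun j => nth 0 s j f)) // nth_index //; apply: Ht.
  by move=> j _; rewrite eq_sym; ring.
- move=> [c Hc]; exists (size s), (fun i => c i), (fun i => nth 0 s i); split.
    by move=> i /=; apply: mem_nth.
  by apply: funext => f; rewrite Hc fct_sumE.
Qed.

Lemma InE_bigsum (R : realType) (T : Type) (d : T -> T -> R) (p : T)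
  (s : seq (Lip0 d p -> R)) (I : Type) (r : seq I) (F : I -> Lip0 d p -> R) :
  (forall i, InE s (F i)) -> InE s (fun f => \sum_(i <- r) F i f).
Proof.
move=> HF; elim: r => [|a r IH].
  by apply: InE_ext (InE0 s) _ => f; rewrite big_nil.
apply: InE_ext (InE_comb 1 (HF a) IH) _ => f.
by rewrite big_cons mul1r.
Qed.

Lemma In_catl (T : Type) (x : T) (a b : seq T) : List.In x a -> List.In x (a ++ b).
Proof. by elim: a => //= y a IH [->|H]; [left|right; apply: IH]. Qed.

Lemma In_catr (T : Type) (x : T) (a b : seq T) : List.In x b -> List.In x (a ++ b).
Proof. by elim: a => //= y a IH H; right; apply: IH. Qed.

Lemma In_map (T U : Type) (f : T -> U) (x : T) (a : seq T) :
  List.In x a -> List.In (f x) (map f a).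
Proof. by elim: a => //= y a IH [->|H]; [left|right; apply: IH]. Qed.

Lemma finite_In (T : Type) (l : seq T) : finite_set [set y | List.In y l].
Proof.
elim: l => [|a l IH].
  have -> : [set y | List.In y [::]] = set0 :> set T by apply/seteqP; split => y.
  exact: finite_set0.
have -> : [set y | List.In y (a :: l)] = [set a] `|` [set y | List.In y l].
  apply/seteqP; split => y /=.
    by case=> [<-|H]; [left|right].
  by case=> [->|H]; [left|right].
by rewrite finite_setU; split => //; apply: finite_set1.
Qed.

Lemma normdist_met (R : realType) (X : normedModType R) :
  [/\ is_met0 (@normdist R X), (forall a b : X, normdist a b = normdist b a),
      (forall a b c : X, normdist a c <= normdist a b + normdist b c),
      (forall a : X, normdist a a = 0) & (forall a b : X, normdist a b = 0 -> a = b)].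
Proof.
split.
- by move=> a b; rewrite /normdist normr_ge0.
- by move=> a b; rewrite /normdist distrC.
- move=> a b c; rewrite /normdist.
  have -> : a - c = (a - b) + (b - c) by rewrite addrA subrK.
  exact: ler_normD.
- by move=> a; rewrite /normdist subrr normr0.
- by move=> a b /eqP; rewrite /normdist normr_eq0 subr_eq0 => /eqP.
Qed.

Lemma extractAB (R : realType) (M : Type) (dM : M -> M -> R) (hM : is_metric dM)
  (X : normedModType R) (F0 : set M) (phi : M -> X) (lam e : R) :
  1 <= lam -> 0 < e ->
  (forall x y, F0 x -> F0 y -> phi x = phi y -> x = y) ->
  (distortion dM (@normdist R X) F0 phi <= (lam + e)%:E)%E ->
  exists A B, [/\ 0 < A, 0 < B, A * B <= lam + 2 * e,
    (forall x y, F0 x -> F0 y -> normdist (phi x) (phi y) <= A * dM x y) &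
    (forall x y, F0 x -> F0 y -> dM x y <= B * normdist (phi x) (phi y))].
Proof.
move=> lam1 e0 inj Hd.
have [dM0 dMeq dMsym dMtri] := hM.
have [nd0 ndsym ndtri ndxx ndeq] := normdist_met X.
case: (pselect (forall x y, F0 x -> F0 y -> x = y)) => [triv|ntriv].
  exists 1, 1; split => //; first by rewrite mulr1; lra.
    by move=> x y Fx Fy; rewrite (triv x y Fx Fy) ndxx mul1r dM0.
  by move=> x y Fx Fy; rewrite (triv x y Fx Fy) (proj2 (dMeq y y) erefl) mul1r nd0.
have [x1 [y1 [Fx1 Fy1 nxy]]] : exists x1 y1, [/\ F0 x1, F0 y1 & x1 <> y1].
  apply: contrapT => H; apply: ntriv => x y Fx Fy; apply: contrapT => nxy.
  by apply: H; exists x, y.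
move: Hd; rewrite /distortion.
set a := lipc _ _ _ _; set b := lipc_inv _ _ _ _ => Hd.
have a0' : (0 <= a)%E.
  by rewrite /a; apply: le_ereal_inf_tmp => _ [L [L0 _] <-]; rewrite lee_fin.
have b0' : (0 <= b)%E.
  by rewrite /b; apply: le_ereal_inf_tmp => _ [L [L0 _] <-]; rewrite lee_fin.
have an0 : a != 0%E.
  apply/eqP => a0; have : (a <= 0%:E)%E by rewrite a0.
  rewrite /a lipc_le // => /(_ x1 y1 Fx1 Fy1); rewrite mul0r => Hzz.
  by apply: nxy; apply: inj => //; apply: ndeq; apply/eqP; rewrite eq_le Hzz nd0.
have bn0 : b != 0%E.
  apply/eqP => b0.
  have nd0' : forall x y, 0 <= normdist (phi x) (phi y) by move=> ? ?; apply: nd0.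
  have Hb := proj1 (@lipc_le _ _ _ (fun x y => normdist (phi x) (phi y)) dM F0 id 0 nd0' (lexx 0)).
  have Hb0 : (lipc (fun x y => normdist (phi x) (phi y)) dM F0 id <= 0%:E)%E.
    by rewrite -lipc_inv_lipc -/b b0.
  have := Hb Hb0 x1 y1 Fx1 Fy1; rewrite mul0r => Hzz.
  by apply: nxy; apply/(dMeq x1 y1)/eqP; rewrite eq_le Hzz dM0.
have a0 : (0 < a)%E by rewrite lt_def an0 a0'.
have b0 : (0 < b)%E by rewrite lt_def bn0 b0'.
have fa : a \is a fin_num.
  rewrite ge0_fin_numE // ltey; apply/eqP => ay; move: Hd.
  by rewrite ay gt0_mulye.
have fb : b \is a fin_num.
  rewrite ge0_fin_numE // ltey; apply/eqP => bi; move: Hd.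
  by rewrite bi gt0_muley.
set ra := fine a; set rb := fine b.
have Ea : a = ra%:E by rewrite fineK.
have Eb : b = rb%:E by rewrite fineK.
have ra0 : 0 < ra by rewrite -lte_fin -Ea.
have rb0 : 0 < rb by rewrite -lte_fin -Eb.
have Hab : ra * rb <= lam + e by rewrite -lee_fin EFinM -Ea -Eb.
  set eta := e / (ra + rb + e + 1).
  have den : 0 < ra + rb + e + 1 by lra.
  have eta0 : 0 < eta by rewrite divr_gt0.
  have etae : eta * (ra + rb + e + 1) = e by rewrite /eta mulfVK // gt_eqF.
  have eta1 : eta <= 1.
    by rewrite /eta ler_pdivrMr // mul1r; lra.
  exists (ra + eta), (rb + eta); split.
  + by rewrite ltr_wpDl // ltW.
  + by rewrite ltr_wpDl // ltW.
  + have h1 : eta * eta <= eta * 1 by rewrite ler_wpM2l // ltW.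
    have h2 : 0 <= eta * e by rewrite mulr_ge0 // ltW.
    nra.
  + have Hc : 0 <= ra + eta by rewrite addr_ge0 // ltW.
    have Ha : (a <= (ra + eta)%:E)%E by rewrite Ea lee_fin lerDl ltW.
    exact: (proj1 (lipc_le (@normdist R X) F0 phi dM0 Hc) Ha).
  + have nd0' : forall x y, 0 <= normdist (phi x) (phi y) by move=> ? ?; apply: nd0.
    have Hc : 0 <= rb + eta by rewrite addr_ge0 // ltW.
    have Hb : (lipc (fun x y => normdist (phi x) (phi y)) dM F0 id <= (rb + eta)%:E)%E.
      by rewrite -lipc_inv_lipc -/b Eb lee_fin lerDl ltW.
    exact: (proj1 (@lipc_le _ _ _ (fun x y => normdist (phi x) (phi y)) dM F0 id (rb + eta) nd0' Hc) Hb).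
Qed.

Lemma eq_big_In (R : realType) (A : Type) (l : seq A) (F G : A -> R) :
  (forall q, List.In q l -> F q = G q) -> \sum_(q <- l) F q = \sum_(q <- l) G q.
Proof.
elim: l => [|a l IH] H; first by rewrite !big_nil.
rewrite !big_cons H /=; last by left.
by rewrite IH // => q Hq; apply: H; right.
Qed.

Fixpoint ptsf (A : Type) (sa : nat -> seq A) (n : nat) : seq A :=
  if n is n'.+1 then sa n' ++ ptsf sa n' else [::].

Lemma In_ptsf (A : Type) (sa : nat -> seq A) n j q :
  (j < n)%N -> List.In q (sa j) -> List.In q (ptsf sa n).
Proof.
elim: n => [//|n IH] /=; rewrite ltnS leq_eqVlt => /orP [/eqP ->|Hj] Hq.
  exact: In_catl.
by apply: In_catr; apply: IH.
Qed.

Lemma bnd_mono (R : realType) (T : Type) (d : T -> T -> R) (p : T)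
  (mu : Lip0 d p -> R) c c' : bnd mu c -> c <= c' -> bnd mu c'.
Proof. by move=> H le f Hf; apply: le_trans (H f Hf) le. Qed.

Lemma normsum_le (R : realType) (A : Type) (l : seq A) (F G : A -> R) :
  (forall q, `|F q| <= G q) -> `|\sum_(q <- l) F q| <= \sum_(q <- l) G q.
Proof.
move=> H; apply: le_trans (ler_norm_sum _ _ _) _.
by apply: ler_sum => q _; apply: H.
Qed.

Unset Implicit Arguments.
Set Strict Implicit.

Theorem theorem4p7 (R : realType) (M : Type) (dM : M -> M -> R)
  (hM : is_metric dM) (p : M) (X : completeNormedModType R) (lam : R)
  (hlam : 1 <= lam) :
  fin_lip_representable dM (@normdist R X) lam ->
  fin_representable (@dnorm R M dM p) (@FreeSpace R M dM p)
    (@dnorm R X (@normdist R X) 0%R) (@FreeSpace R X (@normdist R X) 0%R) lam.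
Proof.
move=> Hrep E [s [Hs ->]] eps eps0.
have [dM0 dMeq dMsym dMtri] := hM.
have dM0' : is_met0 dM by [].
have [nd0 ndsym ndtri ndxx ndeq] := normdist_met X.
have dMxx : forall a, dM a a = 0 by move=> a; apply/dMeq.
have HsG : forall i, Good (nth 0 s i).
  move=> i; case: (ltnP i (size s)) => Hi.
    exact: (Good_free dM0' (Hs _ (mem_nth 0 Hi))).
  by rewrite nth_default //; apply: Good_ext (Good0 dM p) _.
have [k [v [fb [Hv Hb Hr]]]] := biorth dM0' HsG.
have Gv : forall j, Good (v j) by move=> j; apply: InE_Good HsG (Hv j).
have Rep : forall mu, InE s mu -> forall f, mu f = \sum_(j < k) mu (fb j) * v j f.
  move=> mu [c Hc] f.
  transitivity (\sum_(i < size s) c i * \sum_(j < k) nth 0 s i (fb j) * v j f).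
    by rewrite Hc; apply: eq_bigr => i _; rewrite -Hr.
  under eq_bigr do rewrite mulr_sumr.
  rewrite exchange_big /=; apply: eq_bigr => j _.
  rewrite (Hc (fb j)) mulr_suml; apply: eq_bigr => i _; by rewrite mulrA.
have [K HK] : {K : nat -> R & forall j, 0 <= K j /\
    forall x y, `|proj1_sig (fb j) x - proj1_sig (fb j) y| <= K j * dM x y}.
  apply: (@choice nat R (fun j Kj => 0 <= Kj /\
    forall x y, `|proj1_sig (fb j) x - proj1_sig (fb j) y| <= Kj * dM x y)) => j.
  exact: Lip0_lip.
set C := \sum_(j < k) K j.
have C0 : 0 <= C by apply: sumr_ge0 => j _; case: (HK j).
set th := eps / (8 * (lam + eps)).
have le0 : 0 < lam + eps by lra.
have th0 : 0 < th by rewrite divr_gt0 // mulr_gt0.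
have thE : th * (8 * (lam + eps)) = eps by rewrite /th mulfVK // gt_eqF // mulr_gt0.
have th1 : th < 1.
  rewrite /th ltr_pdivrMr ?mulr_gt0 // mul1r; lra.
set del := th / (C + 1).
have del0 : 0 < del by rewrite divr_gt0 // ltr_wpDl.
have Cdel : C * del <= th.
  rewrite /del mulrA ler_pdivrMr ?ltr_wpDl // mulrC ler_wpM2l ?ltW //; lra.
have Cdel0 : 0 <= C * del by rewrite mulr_ge0 // ltW.
have [sa Hsa] : {sa : nat -> seq (R * M) & forall j f, lip1 dM (proj1_sig f) ->
    `|v j f - \sum_(q <- sa j) q.1 * proj1_sig f q.2| <= del}.
  apply: (@choice nat (seq (R * M)) (fun j sj => forall f, lip1 dM (proj1_sig f) ->
    `|v j f - \sum_(q <- sj) q.1 * proj1_sig f q.2| <= del)) => j.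
  by have [_ _ _ ap] := Gv j; apply: ap.
set ys := map snd (ptsf sa k).
have Hys : forall j q, (j < k)%N -> List.In q (sa j) -> List.In q.2 ys.
  by move=> j q Hj Hq; apply: In_map; apply: In_ptsf Hj Hq.
set F0 := [set y | List.In y (p :: ys)].
have inF0 : forall y, (y = p \/ List.In y ys) -> F0 y.
  by move=> y [->|H]; [left|right].
have inF0' : forall y, F0 y -> (y = p \/ List.In y ys).
  by move=> y [->|H]; [left|right].
have e4 : 0 < eps / 4 by rewrite divr_gt0.
have [phi [inj Hdist]] := Hrep F0 (finite_In _) (eps / 4) e4.
have [A [B [A0 B0 HAB HA HB]]] := extractAB hM hlam e4 inj Hdist.
set phi' := fun y => phi y - phi p.
have Hphi' : forall x y, normdist (phi' x) (phi' y) = normdist (phi x) (phi y).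
  by move=> x y; rewrite /normdist /phi' opprB addrA subrK.
have phi'p : phi' p = 0 by rewrite /phi' subrr.
pose Ppsi := fun j : nat => ((\sum_(q <- sa j) q.1 *: @delta R X (@normdist R X) 0 (phi' q.2))
  : Lip0 (@normdist R X) 0 -> R).
pose Tm := fun u : Lip0 dM p -> R => ((\sum_(j < k) u (fb j) *: Ppsi j)
  : Lip0 (@normdist R X) 0 -> R).
pose Qm := fun (u : Lip0 dM p -> R) (h : Lip0 dM p) =>
  \sum_(j < k) u (fb j) * \sum_(q <- sa j) q.1 * proj1_sig h q.2.
have Pev : forall j g, Ppsi j g = \sum_(q <- sa j) q.1 * proj1_sig g (phi' q.2).
  by move=> j g; rewrite /Ppsi fct_sumE.
have Tev : forall u g, Tm u g = \sum_(j < k) u (fb j) * Ppsi j g.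
  by move=> u g; rewrite /Tm fct_sumE.
have homT : forall u, homog (Tm u).
  move=> u a f g Eg; rewrite !Tev mulr_sumr; apply: eq_bigr => j _.
  rewrite !Pev Eg /= mulrCA; congr (_ * _); rewrite mulr_sumr.
  by apply: eq_bigr => q _; ring.
have core : forall u, InE s u -> [/\ 0 <= nrm u, bnd u (nrm u), dnorm u = (nrm u)%:E,
   bnd (Tm u) (A * (nrm u + C * del * nrm u)) &
   forall cT, bnd (Tm u) cT -> nrm u <= B * cT + C * del * nrm u].
  move=> u Hu; have [hu au [cu bu] apu] := InE_Good HsG Hu.
  have [bm mle m0 Em] := nrm_bnd dM0' bu.
  set m := nrm u.
  have Hfb : forall j, `|u (fb j)| <= K j * m.
    by move=> j; apply: (bnd_scale dM0' hu bm (HK j).1 (HK j).2).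
  have homQ : homog (fun h => u h - Qm u h).
    move=> a f g Eg; rewrite (hu a f g Eg) mulrBr; congr (_ - _).
    rewrite /Qm Eg /= mulr_sumr; apply: eq_bigr => j _.
    rewrite mulrCA; congr (_ * _); rewrite mulr_sumr.
    by apply: eq_bigr => q _; ring.
  have Herr : bnd (fun h => u h - Qm u h) (C * del * m).
    move=> h Hh /=; rewrite {1}(Rep u Hu h) /Qm.
    have -> : \sum_(j < k) u (fb j) * v j h -
              \sum_(j < k) u (fb j) * \sum_(q <- sa j) q.1 * proj1_sig h q.2 =
              \sum_(j < k) u (fb j) * (v j h - \sum_(q <- sa j) q.1 * proj1_sig h q.2).
      by rewrite -sumrB; apply: eq_bigr => j _; rewrite mulrBr.
    apply: le_trans (ler_norm_sum _ _ _) _.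
    rewrite /C !mulr_suml; apply: ler_sum => j _; rewrite normrM.
    apply: le_trans (ler_wpM2l (normr_ge0 _) (Hsa j h Hh)) _.
    by rewrite mulrAC; apply: ler_wpM2r; [apply: ltW | apply: Hfb].
  have Herr' : forall h L, 0 <= L -> (forall x y, `|proj1_sig h x - proj1_sig h y| <= L * dM x y) ->
      `|u h - Qm u h| <= L * (C * del * m).
    by move=> h L L0 HL; apply: (bnd_scale dM0' homQ Herr L0 HL).
  split => //.
  - move=> g Hg.
    set val := fun y => proj1_sig g (phi' y).
    have g0 : proj1_sig g 0 = 0 by have [] := proj2_sig g.
    have condA : forall y y', (y = p \/ List.In y ys) -> (y' = p \/ List.In y' ys) ->
        val y - val y' <= A * dM (id y) (id y').
      move=> y y' Hy Hy'; apply: le_trans (ler_norm _) _; apply: le_trans (Hg _ _) _.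
      by rewrite Hphi'; apply: HA; apply: inF0.
    have hlip := mc_lip id val p ys (ltW A0) dMsym dMtri.
    have hext := mc_ext dMxx condA.
    have hp : mc dM id val A p ys p = 0.
      by have := hext p (or_introl erefl); rewrite /= => ->; rewrite /val phi'p g0.
    set hh := mkLip0 dM0' hp (ltW A0) hlip.
    have TQ : Tm u g = Qm u hh.
      rewrite Tev /Qm; apply: eq_bigr => j _; rewrite Pev; congr (_ * _).
      apply: eq_big_In => q Hq /=; congr (_ * _).
      by rewrite (hext q.2) //; right; apply: (Hys j) => //; apply: ltn_ord.
    rewrite TQ.
    have h1 : `|u hh| <= A * m by exact (bnd_scale dM0' hu bm (f := hh) (ltW A0) hlip).
    have h2 : `|u hh - Qm u hh| <= A * (C * del * m) by exact (Herr' hh A (ltW A0) hlip).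
    have -> : Qm u hh = u hh - (u hh - Qm u hh) by ring.
    apply: le_trans (ler_normB _ _) _; rewrite mulrDr; lra.
  - move=> cT HT.
    suff bu2 : bnd u (B * cT + C * del * m) by have [_ -> _ _] := nrm_bnd dM0' bu2.
    move=> h Hh.
    have condB : forall y y', (y = p \/ List.In y ys) -> (y' = p \/ List.In y' ys) ->
        proj1_sig h y - proj1_sig h y' <= B * normdist (phi' y) (phi' y').
      move=> y y' Hy Hy'; apply: le_trans (ler_norm _) _; apply: le_trans (Hh _ _) _.
      by rewrite Hphi'; apply: HB; apply: inF0.
    have glip := mc_lip phi' (proj1_sig h) p ys (ltW B0) ndsym ndtri.
    have gext := mc_ext ndxx condB.
    have g0 : mc (@normdist R X) phi' (proj1_sig h) B p ys 0 = 0.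
      by rewrite -phi'p gext; [have [] := proj2_sig h | left].
    set gg := mkLip0 nd0 g0 (ltW B0) glip.
    have QT : Qm u h = Tm u gg.
      rewrite Tev /Qm; apply: eq_bigr => j _; rewrite Pev; congr (_ * _).
      apply: eq_big_In => q Hq /=; congr (_ * _).
      by rewrite gext //; right; apply: (Hys j) => //; apply: ltn_ord.
    have h3 : `|Tm u gg| <= B * cT by exact (bnd_scale nd0 (homT u) HT (f := gg) (ltW B0) glip).
    have h4 : `|u h - Qm u h| <= C * del * m by apply: Herr.
    have -> : u h = Qm u h + (u h - Qm u h) by ring.
    apply: le_trans (ler_normD _ _) _; rewrite {1}QT; lra.
set E0 := Defs.span [set v0 | v0 \in s].
pose t := [seq Ppsi j | j <- iota 0 k].
set F := Defs.span [set w0 | w0 \in t].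
have InE_E : forall u, E0 u -> InE s u by move=> u /span_InE.
have E_InE : forall u, InE s u -> E0 u by move=> u /span_InE.
have Fex : forall w, F w -> exists u, E0 u /\ Tm u = w.
  move=> w [n [a [tt [Htt Ew]]]].
  have [J HJ] : {J : 'I_n -> nat & forall i, (J i < k)%N /\ tt i = Ppsi (J i)}.
    apply: (@choice _ _ (fun i j => (j < k)%N /\ tt i = Ppsi j)) => i.
    have := Htt i; rewrite /= => /mapP [j]; rewrite mem_iota add0n => /andP [_ Hj] ->.
    by exists j.
  pose u := fun f => \sum_(i < n) a i * v (J i) f.
  exists u; split.
    apply: E_InE.
    have HH : forall i : 'I_n, InE s (fun f => a i * v (J i) f).
      move=> i; apply: InE_ext (InE_comb (a i) (Hv (J i)) (InE0 s)) _ => f.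
      by rewrite addr0.
    have Hb' := @InE_bigsum _ _ _ _ s _ (index_enum 'I_n) (fun i f => a i * v (J i) f) HH.
    by apply: InE_ext Hb' _ => f.
  apply: funext => g; rewrite Tev Ew fct_sumE.
  transitivity (\sum_(j < k) \sum_(i < n) a i * (Ppsi j g * (nat_of_ord j == J i)%:R)).
    apply: eq_bigr => j _; rewrite /u mulr_suml; apply: eq_bigr => i _.
    rewrite Hb ?(HJ i).1 ?ltn_ord // (eq_sym (J i)); ring.
  rewrite exchange_big /=; apply: eq_bigr => i _.
  rewrite -mulr_sumr (sum_delta (fun j => Ppsi j g)) ?(HJ i).1 //.
  by rewrite (HJ i).2.
pose S := fun w => xget (0 : Lip0 dM p -> R) [set u | E0 u /\ Tm u = w].
have HS : forall w, F w -> E0 (S w) /\ Tm (S w) = w.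
  by move=> w Fw; apply: (xgetPex 0 (Fex w Fw)).
have TF : forall u, E0 u -> F (Tm u).
  move=> u Eu; exists k, (fun j => u (fb j)), (fun j => Ppsi j); split => //.
  by move=> j /=; apply: map_f; rewrite mem_iota add0n; exact: ltn_ord.
have Tlin : forall (a : R) u w, Tm (a *: u + w) = a *: Tm u + Tm w.
  move=> a u w; apply: funext => g.
  have -> : (a *: Tm u + Tm w) g = a * Tm u g + Tm w g by [].
  rewrite !Tev mulr_sumr -big_split; apply: eq_bigr => j _.
  have -> : (a *: u + w) (fb j) = a * u (fb j) + w (fb j) by [].
  by rewrite /= mulrDl mulrA.
have Hiso : lin_iso E0 F Tm S.
  split.
  - exact: TF.
  - by move=> w Fw; case: (HS w Fw).
  - move=> u Eu.
    have [Eu' Tu'] := HS (Tm u) (TF u Eu).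
    set u' := S (Tm u) in Eu' Tu' *.
    pose z := fun f => u f - u' f.
    have Iz : InE s z.
      apply: InE_ext (InE_comb (-1) (InE_E _ Eu') (InE_E _ Eu)) _ => f.
      by rewrite /z; ring.
    have [z0 bz Ez _ low] := core z Iz.
    have bT : bnd (Tm z) 0.
      move=> g _; suff -> : Tm z g = 0 by rewrite normr0.
      have : Tm u' g = Tm u g by rewrite Tu'.
      rewrite !Tev => E1.
      transitivity (\sum_(j < k) u (fb j) * Ppsi j g - \sum_(j < k) u' (fb j) * Ppsi j g).
        by rewrite -sumrB; apply: eq_bigr => j _; rewrite /z mulrBl.
      by rewrite E1 subrr.
    have pos : 0 < 1 - C * del by lra.
    have nz : nrm z <= 0.
      have := low 0 bT; rewrite mulr0 add0r => H; nra.
    have bz0 : bnd z 0 by apply: bnd_mono bz nz.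
    apply: funext => f.
    have [Lf [Lf0 HLf]] := Lip0_lip f.
    have [hz' _ _ _] := InE_Good HsG Iz.
    have := bnd_scale dM0' hz' bz0 Lf0 HLf.
    rewrite mulr0 normr_le0 /z subr_eq0 => /eqP ->; by [].
  - by move=> w Fw; case: (HS w Fw).
  - by move=> a u w _ _; apply: Tlin.
have E00 : E0 (0 : Lip0 dM p -> R) by apply: E_InE; apply: InE_ext (InE0 s) _.
have F0w : F (0 : Lip0 (@normdist R X) 0 -> R).
  exists 0%N, (fun _ => 0), (fun _ => 0); split; first by case.
  by rewrite big_ord0.
have dn1 : forall (T0 : Type) (d : T0 -> T0 -> R) (p0 : T0), is_met0 d ->
    (dnorm (0%R : Lip0 d p0 -> R) <= 1%:E)%E.
  move=> T0 d p0 d0; apply: dnorm_le => // g _.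
  have -> : (0 : Lip0 d p0 -> R) g = 0 by [].
  by rewrite normr0.
have opT : (opnorm (@dnorm R M dM p) (@dnorm R X (@normdist R X) 0%R) E0 Tm
    <= (A * (1 + th))%:E)%E.
  apply: ub_ereal_sup => _ [u [Eu Hu1] <-].
  have [m0 bm Em bT _] := core u (InE_E u Eu).
  have m1 : nrm u <= 1 by have [_ -> _ _] := nrm_bnd dM0' (dnorm_ub dM0' Hu1).
  apply: dnorm_le nd0 _; apply: bnd_mono bT _.
  rewrite ler_pM2l //; nra.
have opS : (opnorm (@dnorm R X (@normdist R X) 0%R) (@dnorm R M dM p) F S
    <= (B / (1 - th))%:E)%E.
  apply: ub_ereal_sup => _ [w [Fw Hw1] <-].
  have [ES TS] := HS w Fw.
  have [m0 bm Em _ low] := core (S w) (InE_E _ ES).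
  have pos : 0 < 1 - th by lra.
  rewrite Em lee_fin ler_pdivlMr //.
  have bT : bnd (Tm (S w)) 1 by rewrite TS; apply: dnorm_ub nd0 Hw1.
  have := low 1 bT; nra.
have opT0 : (0 <= opnorm (@dnorm R M dM p) (@dnorm R X (@normdist R X) 0%R) E0 Tm)%E.
  apply: le_trans (dnorm_ge0 nd0 (Tm 0)) _; apply: ereal_sup_ubound.
  by exists 0 => //; split => //; apply: dn1.
have opS0 : (0 <= opnorm (@dnorm R X (@normdist R X) 0%R) (@dnorm R M dM p) F S)%E.
  apply: le_trans (dnorm_ge0 dM0' (S 0)) _; apply: ereal_sup_ubound.
  by exists 0 => //; split => //; apply: dn1.
exists F; split.
  exists t; split => //.
  move=> w /mapP [j _ ->].
  split; [split|].
  + move=> f g h Eh; rewrite !Pev Eh /= -big_split; apply: eq_bigr => q _ /=; ring.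
  + move=> a f g Eg; rewrite !Pev Eg /= mulr_sumr; apply: eq_bigr => q _; ring.
  + apply: (@le_lt_trans _ _ (\sum_(q <- sa j) `|q.1| * normdist (phi' q.2) 0)%:E); last first.
      by rewrite ltry.
    apply: dnorm_le nd0 _ => g Hg; rewrite Pev; apply: normsum_le => q.
    rewrite normrM; apply: ler_wpM2l => //.
    have [g0 _] := proj2_sig g; have := Hg (phi' q.2) 0; by rewrite g0 subr0.
  + move=> e e0; exists (Ppsi j); split; last first.
      rewrite subrr; apply: (@le_lt_trans _ _ 0%:E); last by rewrite lte_fin.
      apply: dnorm_le nd0 _ => g _.
      have -> : (0 : Lip0 (@normdist R X) 0 -> R) g = 0 by [].
      by rewrite normr0.
    exists (size (sa j)), (fun i => (nth (0, p) (sa j) i).1),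
      (fun i => @delta R X (@normdist R X) 0 (phi' (nth (0, p) (sa j) i).2)); split.
      by move=> i; exists (phi' (nth (0, p) (sa j) i).2).
    by rewrite /Ppsi (big_nth (0, p)) big_mkord.
apply: (@le_trans _ _ (opnorm (@dnorm R M dM p) (@dnorm R X (@normdist R X) 0%R) E0 Tm *
   opnorm (@dnorm R X (@normdist R X) 0%R) (@dnorm R M dM p) F S)%E).
  by apply: ereal_inf_lbound; exists (Tm, S).
apply: le_trans (lee_pmul opT0 opS0 opT opS) _.
rewrite -EFinM lee_fin.
have pos : 0 < 1 - th by lra.
rewrite mulrA ler_pdivrMr //.
have h1 : A * B * (1 + th) <= (lam + 2 * (eps / 4)) * (1 + th).
  by apply: ler_wpM2r => //; lra.
have h2 : A * (1 + th) * B = A * B * (1 + th) by ring.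
rewrite h2; nra.
Qed.
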